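(* Let $\mathbb{T}=[0,T]$ with $T\in(0,\infty)$, and suppose $F(\omega^0,\omega^1,m,t)=G(m[0,t])$ for some continuous $G:[0,1]\to\mathbb{R}$ which is differentiable on $(0,1)$. If $F$ satisfies condition (B.2), then $G$ is constant.
   Context: $(\Omega^{\mathrm{com}},\mathcal{F}^{\mathrm{com}},\mathbb{F}^{\mathrm{com}},\mathbb{P}^{\mathrm{com}})$ and $(\Omega^{\mathrm{ind}},\mathcal{F}^{\mathrm{ind}},\mathbb{F}^{\mathrm{ind}},\mathbb{P}^{\mathrm{ind}})$ are filtered probability spaces (filtrations indexed by $\mathbb{T}$); $\Omega^{\mathrm{com}}\times\Omega^{\mathrm{ind}}$ carries $\mathbb{P}^{\mathrm{com}}\times\mathbb{P}^{\mathrm{ind}}$, and $W^0,W^1$ are the coordinate projections. $\mathcal{P}(\mathbb{T})$ is the set of Borel probability measures on $\mathbb{T}$ and $m[0,t]:=m([0,t])$. An $\mathbb{F}^{\mathrm{com}}$-adapted random measure is a $\mathcal{P}(\mathbb{T})$-valued random variable $\mu$ with $\mu[0,t]$ $\mathcal{F}^{\mathrm{com}}_t$-measurable for each $t$ (deterministic measures are such). Condition (B.2): for every pair of $\mathbb{F}^{\mathrm{com}}$-adapted random measures $\mu,\tilde\mu$ with $\mu[0,t]\ge\tilde\mu[0,t]$ for all $t\in\mathbb{T}$ a.s., the process $M_t=F(W^0,W^1,\tilde\mu,t)-F(W^0,W^1,\mu,t)$ is a submartingale. *)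

(* Defs.v *)
From HB Require Import structures.
From mathcomp Require Import all_boot all_order all_algebra.
From mathcomp Require Import all_classical all_reals all_analysis.
Set Implicit Arguments. Unset Strict Implicit. Unset Printing Implicit Defensive.
Import Order.TTheory GRing.Theory Num.Theory.
Import numFieldNormedType.Exports.
Local Open Scope classical_set_scope.
Local Open Scope ring_scope.

(* A Borel probability measure on T = [0,T] is represented as a Borel
   probability measure on R concentrated on [0,T]. *)
Definition is_PT (R : realType) (T : R) (m : probability R R) : Prop :=
  m `[0, T]%classic = 1%E.

Definition cdfm (R : realType) (m : probability R R) (t : R) : R :=
  fine (m `[0, t]%classic).

Definition Gmeasurable (d : measure_display) (O : measurableType d) (R : realType)
  (G : set (set O)) (f : O -> R) : Prop :=
  forall B : set R, measurable B -> G (f @^-1` B).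

Definition filtration (d : measure_display) (O : measurableType d) (R : realType)
  (T : R) (F : R -> set (set O)) : Prop :=
  (forall t, 0 <= t <= T -> sigma_algebra setT (F t) /\ F t `<=` measurable) /\
  (forall s t, 0 <= s -> s <= t -> t <= T -> F s `<=` F t).

Definition prod_filtration (dc di : measure_display)
  (Oc : measurableType dc) (Oi : measurableType di) (R : realType)
  (Fc : R -> set (set Oc)) (Fi : R -> set (set Oi)) (t : R)
  : set (set (Oc * Oi)) :=
  <<s [set A `*` B | A in Fc t & B in Fi t] >>.

(* submartingale: adapted, integrable, and E[M_t | F_s] >= M_s, the latter
   stated through the defining property of conditional expectation *)
Definition submartingale (d : measure_display) (O : measurableType d)
  (R : realType) (P : probability O R) (T : R) (F : R -> set (set O))
  (M : R -> O -> R) : Prop :=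
  (forall t, 0 <= t <= T -> Gmeasurable (F t) (M t)) /\
  (forall t, 0 <= t <= T -> P.-integrable setT (fun w => (M t w)%:E)) /\
  (forall s t, 0 <= s -> s <= t -> t <= T -> forall A, F s A ->
     (\int[P]_(w in A) (M s w)%:E <= \int[P]_(w in A) (M t w)%:E)%E).

Definition adapted_random_measure (dc : measure_display) (Oc : measurableType dc)
  (R : realType) (T : R) (Fc : R -> set (set Oc))
  (mu : Oc -> probability R R) : Prop :=
  (forall w, is_PT T (mu w)) /\
  (forall B : set R, measurable B -> measurable_fun setT (fun w => fine (mu w B))) /\
  (forall t, 0 <= t <= T -> Gmeasurable (Fc t) (fun w => cdfm (mu w) t)).

Definition condB2 (R : realType) (T : R) (dc di : measure_display)
  (Oc : measurableType dc) (Oi : measurableType di)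
  (Pc : probability Oc R) (Pi : probability Oi R)
  (Fc : R -> set (set Oc)) (Fi : R -> set (set Oi))
  (F : Oc -> Oi -> probability R R -> R -> R) : Prop :=
  forall mu mut : Oc -> probability R R,
    adapted_random_measure T Fc mu -> adapted_random_measure T Fc mut ->
    {ae Pc, forall w, forall t, 0 <= t <= T -> cdfm (mut w) t <= cdfm (mu w) t} ->
    submartingale (Pc \x Pi)%E T (prod_filtration Fc Fi)
      (fun t w => F w.1 w.2 (mut w.1) t - F w.1 w.2 (mu w.1) t).

(* Main.v *)
Require Import Defs.
From HB Require Import structures.
From mathcomp Require Import all_boot all_order all_algebra.
From mathcomp Require Import all_classical all_reals all_analysis.
Import Order.TTheory GRing.Theory Num.Theory.
Import numFieldNormedType.Exports.
Local Open Scope classical_set_scope.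
Local Open Scope ring_scope.

Section mix.
Context (R : realType) (p q : {nonneg R}) (hpq : p%:num + q%:num = 1) (a b : R).

Definition mixm (_ : p%:num + q%:num = 1) : set R -> \bar R :=
  measure_add (mscale p (@dirac _ R a R)) (mscale q (@dirac _ R b R)).

HB.instance Definition _ := Measure.on (mixm hpq).

Let mix_setT : mixm hpq setT = 1%E.
Proof.
rewrite /mixm measure_addE; rewrite /mscale /= /dirac; rewrite /mscale /=; by rewrite /dirac !indicE !in_setT -!EFinM -EFinD !mulr1 hpq.
Qed.

HB.instance Definition _ := Measure_isProbability.Build _ _ _ (mixm hpq) mix_setT.

Lemma mixmE A : mixm hpq A = (p%:num * (a \in A)%:R + q%:num * (b \in A)%:R)%:E.
Proof. rewrite /mixm measure_addE; rewrite /mscale /= /dirac; rewrite /mscale /=; by rewrite /dirac !indicE -!EFinM -EFinD. Qed.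
End mix.

Lemma inItv (R : realType) (x t : R) : (x \in `[0,t]%classic) = (0 <= x <= t).
Proof. by apply/idP/idP; rewrite inE /= in_itv. Qed.

Lemma cdfm_ge0 (R : realType) (m : probability R R) t : 0 <= cdfm m t.
Proof. exact: fine_ge0. Qed.

Lemma cdfm_le1 (R : realType) (m : probability R R) t : cdfm m t <= 1.
Proof.
have h1 := probability_le1 m (measurable_itv `[0, t]).
have h0 : (0 <= m `[0%R, t]%classic)%E := measure_ge0 m _.
rewrite /cdfm -[leRHS]/(fine 1%E); apply: fine_le => //.
by rewrite ge0_fin_numE // (le_lt_trans h1) // ltey.
Qed.

Lemma cdfm_dirac (R : realType) (a t : R) :
  cdfm (@dirac _ R a R : probability R R) t = ((0 <= a) && (a <= t))%:R.
Proof. rewrite /cdfm /dirac /=; by rewrite indicE inItv. Qed.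

Lemma cdfm_mix (R : realType) (p q : {nonneg R}) (h : p%:num + q%:num = 1) (a b t : R) :
  cdfm (@mixm R p q a b h : probability R R) t = p%:num * ((0 <= a) && (a <= t))%:R + q%:num * ((0 <= b) && (b <= t))%:R.
Proof. rewrite /cdfm /=; by rewrite mixmE !inItv. Qed.

Lemma cdfm_PT (R : realType) (T : R) (m : probability R R) : is_PT T m -> cdfm m T = 1.
Proof. by rewrite /cdfm => ->. Qed.

Lemma PT_dirac (R : realType) (T a : R) : 0 <= a <= T -> is_PT T (@dirac _ R a R : probability R R).
Proof. move=> ha; rewrite /is_PT /=; rewrite /dirac /=; by rewrite indicE inItv ha. Qed.

Lemma PT_mix (R : realType) (T : R) (p q : {nonneg R}) (h : p%:num + q%:num = 1) (a b : R) :
  0 <= a <= T -> 0 <= b <= T -> is_PT T (@mixm R p q a b h : probability R R).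
Proof. move=> ha hb; rewrite /is_PT /=; by rewrite mixmE !inItv ha hb !mulr1 h. Qed.

Theorem mainTheorem5 (R : realType) (T : R) (hT : 0 < T)
  (dc di : measure_display) (Oc : measurableType dc) (Oi : measurableType di)
  (Pc : probability Oc R) (Pi : probability Oi R)
  (Fc : R -> set (set Oc)) (Fi : R -> set (set Oi))
  (hFc : filtration T Fc) (hFi : filtration T Fi)
  (F : Oc -> Oi -> probability R R -> R -> R) (G : R -> R)
  (hF : forall w0 w1 (m : probability R R) t, is_PT T m -> 0 <= t <= T ->
          F w0 w1 m t = G (cdfm m t))
  (hGc : {within `[0, 1], continuous G})
  (hGd : forall x, 0 < x < 1 -> derivable G x 1)
  (hB2 : condB2 T Pc Pi Fc Fi F) :
  forall x y, 0 <= x <= 1 -> 0 <= y <= 1 -> G x = G y.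
Proof.
have ad : forall m, is_PT T m -> adapted_random_measure T Fc (fun _ => m).
  move=> m hm; split => //; split.
    by move=> B mB; exact: measurable_cst.
  move=> t0 ht0 B mB; rewrite preimage_cst.
  have [[s0 sC _] _] := hFc.1 t0 ht0.
  by case: ifP => _ //; have := sC _ s0; rewrite setD0.
have key : forall m' m s t, is_PT T m -> is_PT T m' ->
    (forall t, 0 <= t <= T -> cdfm m' t <= cdfm m t) ->
    0 <= s -> s <= t -> t <= T ->
    G (cdfm m' s) - G (cdfm m s) <= G (cdfm m' t) - G (cdfm m t).
  move=> m' m s t hm hm' hle hs hst htT.
  have := hB2 _ _ (ad m hm) (ad m' hm') (aeW _ (fun w => hle)).
  case=> _ [_ Hsub].
  have hsT : 0 <= s <= T by rewrite hs (le_trans hst htT).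
  have htT' : 0 <= t <= T by rewrite (le_trans hs hst) htT.
  have Fs : prod_filtration Fc Fi s setT.
    apply: sub_gen_smallest; exists setT.
      by have [[s0 sC _] _] := hFc.1 s hsT; have := sC _ s0; rewrite setD0.
    exists setT; last exact: setXTT.
    by have [[s0 sC _] _] := hFi.1 s hsT; have := sC _ s0; rewrite setD0.
  have := Hsub s t hs hst htT setT Fs.
  have E u : 0 <= u <= T -> (fun w : Oc * Oi => (F w.1 w.2 m' u - F w.1 w.2 m u)%:E)
     = cst (G (cdfm m' u) - G (cdfm m u))%:E.
    by move=> hu; apply/funext => w; rewrite /= !hF.
  rewrite /= (E s hsT) (E t htT') !integral_cst //= probability_setT !mule1.
  by rewrite lee_fin.
have hT2 : 0 < T / 2 by rewrite divr_gt0.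
have hT2T : T / 2 <= T by rewrite ler_pdivrMr // ler_peMr // ?(ltW hT) // ler1n.
have main : forall x, 0 <= x <= 1 -> G x = G 1.
  move=> x /andP[x0 x1].
  have x0' : 0 <= 1 - x by rewrite subr_ge0.
  have hpq : (@NngNum _ x x0)%:num + (@NngNum _ _ x0')%:num = 1.
    by rewrite /= addrC subrK.
  pose mp := (@mixm R _ _ 0 (T / 2) hpq : probability R R).
  pose m1 := (@dirac _ R 0 R : probability R R).
  pose mT := (@dirac _ R T R : probability R R).
  have PTmp : is_PT T mp by apply: PT_mix; rewrite ?lexx ?(ltW hT) ?(ltW hT2) ?hT2T.
  have PTm1 : is_PT T m1 by apply: PT_dirac; rewrite lexx ltW.
  have PTmT : is_PT T mT by apply: PT_dirac; rewrite lexx ltW.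
  have c0 : cdfm mp 0 = x.
    rewrite cdfm_mix /= lexx (lt_geF hT2) andbF /=; by rewrite mulr1 mulr0 addr0.
  have cT2 : cdfm mp (T / 2) = 1.
    rewrite cdfm_mix /= !lexx (ltW hT2) /= ?andbT; by rewrite !mulr1 addrC subrK.
  have c1 : forall t, 0 <= t -> cdfm m1 t = 1.
    by move=> t ht; rewrite cdfm_dirac lexx ht.
  have cT : forall t, 0 <= t < T -> cdfm mT t = 0.
    by move=> t /andP[_ ht]; rewrite cdfm_dirac (lt_geF ht) andbF.
  have A := key mp m1 0 (T / 2) PTm1 PTmp.
  have B := key mT mp 0 (T / 2) PTmp PTmT.
  have hle1 : forall t, 0 <= t <= T -> cdfm mp t <= cdfm m1 t.
    by move=> t /andP[t0 _]; rewrite c1 // cdfm_le1.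
  have hle2 : forall t, 0 <= t <= T -> cdfm mT t <= cdfm mp t.
    move=> t /andP[t0 tT]; have [tT'|tT'] := ltP t T.
      by rewrite cT ?t0 // cdfm_ge0.
    have -> : t = T by apply/le_anti; rewrite tT tT'.
    by rewrite !cdfm_PT.
  have e1 : cdfm mT 0 = 0 by apply: cT; rewrite lexx.
  have e2 : cdfm mT (T / 2) = 0 by apply: cT; rewrite (ltW hT2) /= ltr_pdivrMr // ltr_pMr // ltr1n.
  have hA := A hle1 (lexx 0) (ltW hT2) hT2T.
  rewrite c0 cT2 !c1 ?lexx ?(ltW hT2) // in hA.
  have hB := B hle2 (lexx 0) (ltW hT2) hT2T.
  rewrite c0 cT2 e1 e2 in hB.
  have h1 : G x <= G 1 by move: hA; rewrite subrr subr_le0.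
  have h2 : G 1 <= G x by move: hB; rewrite lerD2l lerN2.
  by apply/le_anti; rewrite h1 h2.
by move=> x y hx hy; rewrite main // main.
Qed.
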